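(* Assume the network $\Sigma$ is well-posed and let $\mathcal{A}\subset X$ be nonempty and closed. (i) $\Sigma$ is ISS with respect to $\mathcal{A}$ if and only if there is $M\in\mathbb{N}$ such that $\Sigma^M$ is ISS with respect to $\mathcal{A}$ and $f$ is $\mathcal{K}$-bounded with respect to $\mathcal{A}$. (ii) $\Sigma$ is eISS with respect to $\mathcal{A}$ if and only if there is $M\in\mathbb{N}$ such that $\Sigma^M$ is eISS with respect to $\mathcal{A}$ and $f$ is $\mathcal{K}$-bounded with respect to $\mathcal{A}$ with a linear function $\kappa_1$ (i.e. $\kappa_1(s)=cs$ for some $c>0$).
   Context: Setting: for each $i\in\mathbb{N}$ fix positive integers $n_i,p_i$, norms $|\cdot|$ on $\mathbb{R}^{n_i},\mathbb{R}^{p_i}$, and a finite set $I_i\subset\mathbb{N}\setminus\{i\}$ such that each set $\{j: i\in I_j\}$ is finite; let $f_i:\mathbb{R}^{n_i}\times\prod_{j\in I_i}\mathbb{R}^{n_j}\times\mathbb{R}^{p_i}\to\mathbb{R}^{n_i}$ be continuous. $X$ (resp. $U$) is the space of sequences $(x_i)$ with $x_i\in\mathbb{R}^{n_i}$ (resp. $(u_i)$ with $u_i\in\mathbb{R}^{p_i}$) with finite norm $|x|_\infty=\sup_i|x_i|$ (resp. $|u|_\infty=\sup_i|u_i|$); $X_E=\prod_i\mathbb{R}^{n_i}$; $f:X_E\times U\to X_E$, $f(x,u)_i=f_i(x_i,(x_j)_{j\in I_i},u_i)$. The network $\Sigma$ is $x(k+1)=f(x(k),u(k))$, $k\in\mathbb{N}_0$.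 $\mathcal{U}$ is the set of sequences $u:\mathbb{N}_0\to U$ with $\|u\|_\infty:=\sup_{k\ge0}|u(k)|_\infty<\infty$; $x(k,\xi,u)$ is the solution with $x(0)=\xi$. $\Sigma$ is well-posed if $f(X\times U)\subset X$. For $\mathcal{A}\subset X$ nonempty closed, $|x|_{\mathcal{A}}:=\inf_{y\in\mathcal{A}}|x-y|_\infty$. $f$ is $\mathcal{K}$-bounded w.r.t. $\mathcal{A}$ if there are $\kappa_1,\kappa_2\in\mathcal{K}$ with $|f(\xi,\mu)|_{\mathcal{A}}\le\kappa_1(|\xi|_{\mathcal{A}})+\kappa_2(|\mu|_\infty)$ for all $\xi\in X,\mu\in U$. $\Sigma$ is ISS w.r.t. $\mathcal{A}$ if there exist $\beta\in\mathcal{KL}$, $\gamma\in\mathcal{K}$ with $|x(k,\xi,u)|_{\mathcal{A}}\le\max\{\beta(|\xi|_{\mathcal{A}},k),\gamma(\|u\|_\infty)\}$ for all $\xi\in X$, $u\in\mathcal{U}$, $k\in\mathbb{N}_0$; it is eISS if additionally $\beta$ can be taken as $\beta(r,k)=C\rho^k r$ with $C\ge1$, $\rho\in[0,1)$. For $M\in\mathbb{N}$, $\Sigma^M$ denotes the $M$-iterate system $x^+=f^M(x,(u_0,\dots,u_{M-1}))$, where $f^1=f$ and $f^{k+1}(x,(u_0,\dots,u_k))=f(f^k(x,(u_0,\dots,u_{k-1})),u_k)$; $\Sigma^M$ is ISS w.r.t. $\mathcal{A}$ if there exist $\beta\in\mathcal{KL}$, $\gamma\in\mathcal{K}$ with $|x(Mk,\xi,u)|_{\mathcal{A}}\le\max\{\beta(|\xi|_{\mathcal{A}},k),\gamma(\|u\|_\infty)\}$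 for all $\xi\in X$, $u\in\mathcal{U}$, $k\in\mathbb{N}_0$, and eISS if $\beta$ can be taken as $C\rho^k r$ with $C\ge1$, $\rho\in[0,1)$. $\mathcal{K}$: continuous strictly increasing $\gamma:[0,\infty)\to[0,\infty)$ with $\gamma(0)=0$; $\mathcal{L}$: continuous strictly decreasing functions tending to $0$; $\mathcal{KL}$: continuous $\beta$ with $\beta(\cdot,t)\in\mathcal{K}$ and $\beta(r,\cdot)\in\mathcal{L}$ for $r>0$. *)

(* Defs.v *)
From HB Require Import structures.
From mathcomp Require Import all_boot all_order all_algebra.
From mathcomp Require Import all_classical all_reals all_analysis.
Set Implicit Arguments. Unset Strict Implicit. Unset Printing Implicit Defensive.
Import Order.TTheory GRing.Theory Num.Theory.
Import numFieldNormedType.Exports.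
Local Open Scope classical_set_scope.
Local Open Scope ring_scope.

Section Network.
Variable R : realType.

Definition is_norm (m : nat) (N : 'rV[R]_m -> R) : Prop :=
  [/\ (forall x, 0 <= N x),
      (forall x, N x = 0 -> x = 0),
      (forall (a : R) x, N (a *: x) = `|a| * N x) &
      (forall x y, N (x + y) <= N x + N y)].

Definition class_K (g : R -> R) : Prop :=
  [/\ g 0 = 0,
      {within [set x : R | 0 <= x], continuous g} &
      (forall a b, 0 <= a -> a < b -> g a < g b)].

Definition class_L (g : R -> R) : Prop :=
  [/\ {within [set x : R | 0 <= x], continuous g},
      (forall a b, 0 <= a -> a < b -> g b < g a) &
      g x @[x --> +oo] --> 0].

Definition class_KL (b : R -> R -> R) : Prop :=
  [/\ {within [set z : R * R | 0 <= z.1 /\ 0 <= z.2],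
         continuous (fun z : R * R => b z.1 z.2)},
      (forall t, 0 <= t -> class_K (fun r => b r t)) &
      (forall r, 0 < r -> class_L (fun t => b r t))].

Variables (n p : nat -> nat).
Variables (nx : forall i, 'rV[R]_(n i) -> R) (nu : forall i, 'rV[R]_(p i) -> R).

Definition stateE := forall i : nat, 'rV[R]_(n i).
Definition inputE := forall i : nat, 'rV[R]_(p i).

Definition in_X (x : stateE) : Prop := exists C : R, forall i, @nx i (x i) <= C.
Definition in_U (u : inputE) : Prop := exists C : R, forall i, @nu i (u i) <= C.

Definition normX (x : stateE) : R := sup (range (fun i => @nx i (x i))).
Definition normU (u : inputE) : R := sup (range (fun i => @nu i (u i))).

Definition subX (x y : stateE) : stateE := fun i => x i - y i.

Definition distA (A : set stateE) (x : stateE) : R :=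
  inf [set normX (subX x y) | y in A].

Definition closed_in_X (A : set stateE) : Prop :=
  forall x, in_X x ->
    (forall e : R, 0 < e -> exists2 y, A y & normX (subX x y) < e) -> A x.

Definition in_calU (u : nat -> inputE) : Prop :=
  exists C : R, forall k i, @nu i (u k i) <= C.
Definition normcalU (u : nat -> inputE) : R := sup (range (fun k => normU (u k))).

Variable I : nat -> seq nat.
Variable fi : forall i, stateE -> 'rV[R]_(p i) -> 'rV[R]_(n i).

Definition fi_local : Prop :=
  forall i (x x' : stateE) u, x' i = x i -> (forall j, j \in I i -> x' j = x j) ->
    @fi i x' u = @fi i x u.

Definition fi_continuous : Prop :=
  forall i (x : stateE) (u : 'rV[R]_(p i)) (e : R), 0 < e ->
    exists2 d : R, 0 < d & forall (x' : stateE) (u' : 'rV[R]_(p i)),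
      @nx i (x' i - x i) < d -> (forall j, j \in I i -> @nx j (x' j - x j) < d) ->
      @nu i (u' - u) < d -> @nx i (@fi i x' u' - @fi i x u) < e.

Definition fnet (x : stateE) (u : inputE) : stateE := fun i => @fi i x (u i).

Definition well_posed : Prop :=
  forall x u, in_X x -> in_U u -> in_X (fnet x u).

Fixpoint traj (xi : stateE) (u : nat -> inputE) (k : nat) : stateE :=
  match k with
  | 0%N => xi
  | k'.+1 => fnet (traj xi u k') (u k')
  end.

Definition ISS (A : set stateE) : Prop :=
  exists (beta : R -> R -> R) (gamma : R -> R),
    [/\ class_KL beta, class_K gamma &
      forall xi u k, in_X xi -> in_calU u ->
        distA A (traj xi u k) <= Num.max (beta (distA A xi) k%:R) (gamma (normcalU u))].

Definition eISS (A : set stateE) : Prop :=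
  exists (C rho : R) (gamma : R -> R),
    [/\ 1 <= C, 0 <= rho < 1, class_K gamma &
      forall xi u k, in_X xi -> in_calU u ->
        distA A (traj xi u k) <= Num.max (C * rho ^+ k * distA A xi) (gamma (normcalU u))].

(** ISS / eISS of the M-iterate system Sigma^M: x(M k, xi, u) estimates *)
Definition ISS_iter (M : nat) (A : set stateE) : Prop :=
  exists (beta : R -> R -> R) (gamma : R -> R),
    [/\ class_KL beta, class_K gamma &
      forall xi u k, in_X xi -> in_calU u ->
        distA A (traj xi u (M * k)) <= Num.max (beta (distA A xi) k%:R) (gamma (normcalU u))].

Definition eISS_iter (M : nat) (A : set stateE) : Prop :=
  exists (C rho : R) (gamma : R -> R),
    [/\ 1 <= C, 0 <= rho < 1, class_K gamma &
      forall xi u k, in_X xi -> in_calU u ->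
        distA A (traj xi u (M * k)) <= Num.max (C * rho ^+ k * distA A xi) (gamma (normcalU u))].

Definition K_bounded (A : set stateE) : Prop :=
  exists k1 k2 : R -> R, [/\ class_K k1, class_K k2 &
    forall xi mu, in_X xi -> in_U mu ->
      distA A (fnet xi mu) <= k1 (distA A xi) + k2 (normU mu)].

Definition K_bounded_lin (A : set stateE) : Prop :=
  exists (c : R) (k2 : R -> R), [/\ 0 < c, class_K k2 &
    forall xi mu, in_X xi -> in_U mu ->
      distA A (fnet xi mu) <= c * distA A xi + k2 (normU mu)].

End Network.

(* Main.v *)
Require Import Defs.
From HB Require Import structures.
From mathcomp Require Import all_boot all_order all_algebra.
From mathcomp Require Import all_classical all_reals all_analysis.
From mathcomp Require Import zify ring lra.
Import Order.TTheory GRing.Theory Num.Theory.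
Import numFieldNormedType.Exports.
Local Open Scope classical_set_scope.
Local Open Scope ring_scope.
Section Basic.
Variable R : realType.
Variables (n p : nat -> nat).
Variables (nx : forall i, 'rV[R]_(n i) -> R) (nu : forall i, 'rV[R]_(p i) -> R).
Variable fi : forall i, stateE R n -> 'rV[R]_(p i) -> 'rV[R]_(n i).
Variable A : set (stateE R n).
Hypothesis nxN : forall i, is_norm (nx i).
Hypothesis nuN : forall i, is_norm (nu i).
Hypothesis A0 : A !=set0.
Hypothesis wp : well_posed nx nu fi.

Lemma sup_range_ge0 {T : Type} (t0 : T) (g : T -> R) :
  (forall t, 0 <= g t) -> 0 <= sup (range g).
Proof.
move=> g0; have [ub|nub] := pselect (has_ubound (range g)).
  by apply: le_trans (g0 t0) _; apply: ub_le_sup => //; exists t0.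
by rewrite sup_out // => -[].
Qed.

Lemma normX_ge0 x : 0 <= normX nx x.
Proof. apply: (sup_range_ge0 0%N) => i; by case: (nxN i). Qed.

Lemma normU_ge0 x : 0 <= normU nu x.
Proof. apply: (sup_range_ge0 0%N) => i; by case: (nuN i). Qed.

Lemma normcalU_ge0 u : 0 <= normcalU nu u.
Proof. apply: (sup_range_ge0 0%N) => i; exact: normU_ge0. Qed.

Lemma distA_ge0 x : 0 <= distA nx A x.
Proof.
apply: lb_le_inf.
  by case: A0 => y Ay; exists (normX nx (subX x y)); exists y.
by move=> _ [y _ <-]; exact: normX_ge0.
Qed.

Lemma in_calU_U u k : in_calU nu u -> in_U nu (u k).
Proof. by case=> C HC; exists C => i; exact: HC. Qed.

Lemma normU_le u k : in_calU nu u -> normU nu (u k) <= normcalU nu u.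
Proof.
case=> C HC; apply: ub_le_sup; last by exists k.
exists C => _ [j _ <-]; apply: ge_sup; first by exists (nu 0%N (u j 0%N)), 0%N.
by move=> _ [i _ <-]; exact: HC.
Qed.

Lemma normcalU_cst mu : normcalU nu (fun _ => mu) = normU nu mu.
Proof.
rewrite /normcalU; have -> : range (fun _ : nat => normU nu mu) = [set normU nu mu].
  by apply/seteqP; split => [_ [k _ <-] //|_ ->]; exists 0%N.
exact: sup1.
Qed.

Lemma in_calU_cst mu : in_U nu mu -> in_calU nu (fun _ => mu).
Proof. by case=> C HC; exists C => k i; exact: HC. Qed.

Lemma traj_inX xi u k : in_X nx xi -> in_calU nu u -> in_X nx (traj fi xi u k).
Proof.
move=> Hx Hu; elim: k => [//|k IH] /=.
by apply: wp => //; exact: in_calU_U.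
Qed.

Lemma traj_add xi u m j : traj fi xi u (m + j) = traj fi (traj fi xi u m) (fun k => u (m + k)%N) j.
Proof. elim: j => [|j IH] /=; first by rewrite addn0. by rewrite addnS /= IH. Qed.

End Basic.

Section Iter.
Variable R : realType.

Definition incr0 (g : R -> R) := forall x y, 0 <= x -> x <= y -> g x <= g y.

Lemma iter_ge {k1 : R -> R} j z : (forall x, 0 <= x -> 0 <= k1 x) -> 0 <= z ->
  z <= iter j (fun x => x + k1 x) z.
Proof.
move=> k0 z0; elim: j => [//|j IH] /=.
apply: (le_trans IH); rewrite lerDl; apply: (k0 _); exact: le_trans z0 IH.
Qed.

Lemma iter_mono (k1 : R -> R) j : (forall x, 0 <= x -> 0 <= k1 x) -> incr0 k1 ->
  incr0 (iter j (fun x => x + k1 x)).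
Proof.
move=> k0 km; elim: j => [//|j IH] x y x0 xy /=.
have := IH x y x0 xy => H; apply: lerD => //; apply: km => //.
exact: le_trans x0 (iter_ge j x k0 x0).
Qed.

Lemma iter_le (k1 : R -> R) j M z : (forall x, 0 <= x -> 0 <= k1 x) -> 0 <= z ->
  (j <= M)%N -> iter j (fun x => x + k1 x) z <= iter M (fun x => x + k1 x) z.
Proof.
move=> k0 z0 /subnK <-; elim: (M - j)%N => [//|d IH] /=.
apply: (le_trans IH); rewrite lerDl; apply: (k0 _).
exact: le_trans z0 (iter_ge _ _ k0 z0).
Qed.

Lemma iter_bound (a : nat -> R) (k1 : R -> R) (b : R) :
  (forall x, 0 <= x -> 0 <= k1 x) -> incr0 k1 -> 0 <= b -> (forall i, 0 <= a i) ->
  (forall i, a i.+1 <= k1 (a i) + b) ->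
  forall m j, a (m + j)%N <= iter j (fun x => x + k1 x) (a m + b).
Proof.
move=> k0 km b0 a0 step m; elim => [|j IH] /=.
  by rewrite addn0 lerDl.
have z0 : 0 <= a m + b by rewrite addr_ge0.
rewrite addnS; apply: le_trans (step _) _; rewrite addrC; apply: lerD.
  apply: le_trans (iter_ge j _ k0 z0); by rewrite lerDr.
exact: km.
Qed.

End Iter.
Arguments incr0 {R}.
Set Implicit Arguments. Unset Strict Implicit. Unset Printing Implicit Defensive.
Lemma retract_cont {T U : topologicalType} (A : set T) (f : T -> U) (pi : T -> T) :
  {within A, continuous f} -> continuous pi -> (forall x, A (pi x)) ->
  continuous (f \o pi).
Proof.
move=> /subspace_continuousP fc pc pA x.
have H := fc (pi x) (pA x).
apply: cvg_trans _ H.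
move=> W. rewrite /within /= nbhs_simpl => Wn.
have := pc x _ Wn. rewrite nbhs_simpl /=.
apply: filterS => y; apply; exact: pA.
Qed.

Arguments retract_cont {T U} A f pi.
Section Topo.
Variable R : realType.
Definition pos (x : R) := Num.max x 0.

Lemma pos_cont : continuous pos.
Proof.
move=> x; apply: (@continuous_max _ _ id (fun=> 0) x); first exact: cvg_id.
exact: cvg_cst.
Qed.

Lemma pos_ge0 x : 0 <= pos x.
Proof. by rewrite /pos le_max lexx orbT. Qed.

Lemma posE x : 0 <= x -> pos x = x.
Proof. by move=> x0; rewrite /pos max_l. Qed.

Lemma fst_cont : continuous (@fst R R).
Proof. move=> [x y]; exact: cvg_fst. Qed.
Lemma snd_cont : continuous (@snd R R).
Proof. move=> [x y]; exact: cvg_snd. Qed.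

Lemma classK_glob g : class_K g -> continuous (fun x => g (pos x)).
Proof.
case=> _ gc _.
apply: (@retract_cont _ _ [set x : R | 0 <= x] g pos gc pos_cont pos_ge0).
Qed.

Lemma classKL_glob b : class_KL b -> continuous (fun z : R * R => b (pos z.1) (pos z.2)).
Proof.
case=> bc _ _.
apply: (@retract_cont _ _ _ (fun z : R * R => b z.1 z.2) (fun z => (pos z.1, pos z.2)) bc).
  move=> z; apply: (@cvg_pair _ _ _ _ (nbhs (pos z.1)) (nbhs (pos z.2)) _ _ _ (fun z : R * R => pos z.1) (fun z : R * R => pos z.2)).
    apply: (cvg_comp _ _ (@cvg_fst _ _ (nbhs z.1) (nbhs z.2) _)); exact: pos_cont.
  apply: (cvg_comp _ _ (@cvg_snd _ _ (nbhs z.1) (nbhs z.2) _)); exact: pos_cont.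
by move=> z; split; exact: pos_ge0.
Qed.
End Topo.
Arguments pos {R}.
Section Topo2.
Variable R : realType.
Definition sincr0 (g : R -> R) := forall x y, 0 <= x -> x < y -> g x < g y.

Lemma within_eq (A : set R) (f g : R -> R) :
  (forall x, A x -> f x = g x) -> continuous g -> {within A, continuous f}.
Proof.
move=> fg gc.
apply: (@subspace_eq_continuous _ A _ (from_subspace A g) (from_subspace A f)).
  by move=> x; rewrite inE => Ax; rewrite /from_subspace fg.
exact: continuous_subspaceT.
Qed.

Lemma sincr_incr (g : R -> R) : sincr0 g -> incr0 g.
Proof.
move=> gs x y x0; rewrite le_eqVlt => /orP[/eqP->//|xy].
exact/ltW/gs.
Qed.

Lemma classK_sincr (g : R -> R) : class_K g -> sincr0 g.
Proof. by case. Qed.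

Lemma classK_ge0 (g : R -> R) : class_K g -> forall x, 0 <= x -> 0 <= g x.
Proof.
move=> gK x x0; have [g0 _ gs] := gK.
by have := sincr_incr (classK_sincr gK) (lexx 0) x0; rewrite g0.
Qed.

Lemma sincr_ge0 (g : R -> R) : g 0 = 0 -> sincr0 g -> forall x, 0 <= x -> 0 <= g x.
Proof. by move=> g0 gs x x0; have := sincr_incr gs (lexx 0) x0; rewrite g0. Qed.

Lemma classK_comp_sum (g h S : R -> R) : class_K g -> class_K h -> continuous S ->
  S 0 = 0 -> sincr0 S -> class_K (fun s => S (g s + h s)).
Proof.
move=> gK hK Sc S0 Ss; split.
- by have [-> _ _] := gK; have [-> _ _] := hK; rewrite addr0.
- apply: (@within_eq _ _ (fun s => S (g (pos s) + h (pos s)))).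
    by move=> x /= x0; rewrite posE.
  move=> x; apply: continuous_comp; last exact: Sc.
  apply: cvgD; [exact: classK_glob gK x|exact: classK_glob hK x].
- move=> a b a0 ab; apply: Ss.
    by rewrite addr_ge0 // ?(classK_ge0 gK) ?(classK_ge0 hK).
  apply: ltrD; [exact: (classK_sincr gK a0 ab)|exact: (classK_sincr hK a0 ab)].
Qed.
End Topo2.
Arguments sincr0 {R}.
Section KL2.
Variable R : realType.

Lemma pos_le (x y : R) : x <= y -> pos x <= pos y.
Proof. by move=> xy; rewrite /pos ge_max !le_max xy lexx !orbT. Qed.

Lemma pos_infty (c d : R) : 0 < c -> (fun t => pos (t / c - d)) @ +oo --> +oo.
Proof.
move=> c0; apply/cvgryPge => A.
have := @nbhs_pinfty_ge _ ((A + d) * c) (num_real _).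
apply: filterS => t Ht.
rewrite /pos le_max; apply/orP; left.
rewrite lerBrDr ler_pdivlMr //.
Qed.

Lemma pos_infty1 : (fun t : R => pos t) @ +oo --> +oo.
Proof.
apply/cvgryPge => A.
have := @nbhs_pinfty_ge _ A (num_real _).
apply: filterS => t Ht.
by rewrite /pos le_max Ht.
Qed.

End KL2.
Section KL.
Variable R : realType.
Implicit Types b : R -> R -> R.

Lemma KL_K b t : class_KL b -> 0 <= t -> class_K (fun r => b r t).
Proof. by case=> _ H _; exact: H. Qed.

Lemma KL_0 b t : class_KL b -> 0 <= t -> b 0 t = 0.
Proof. by move=> bK t0; have [] := KL_K bK t0. Qed.

Lemma KL_ge0 b r t : class_KL b -> 0 <= r -> 0 <= t -> 0 <= b r t.
Proof. by move=> bK r0 t0; exact: (classK_ge0 (KL_K bK t0)). Qed.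

Lemma KL_incr b r r' t : class_KL b -> 0 <= r -> r <= r' -> 0 <= t -> b r t <= b r' t.
Proof. by move=> bK r0 rr t0; exact: (sincr_incr (classK_sincr (KL_K bK t0))). Qed.

Lemma KL_pos b r t : class_KL b -> 0 < r -> 0 <= t -> 0 < b r t.
Proof.
move=> bK r0 t0; rewrite -(KL_0 bK t0).
exact: (classK_sincr (KL_K bK t0) (lexx 0) r0).
Qed.

Lemma KL_sdecr b r x y : class_KL b -> 0 < r -> 0 <= x -> x < y -> b r y < b r x.
Proof. by case=> _ _ H r0; case: (H r r0) => _ H2 _; exact: H2. Qed.

Lemma KL_decr b r x y : class_KL b -> 0 <= r -> 0 <= x -> x <= y -> b r y <= b r x.
Proof.
move=> bK; rewrite le_eqVlt => /orP[/eqP <- x0 xy|r0 x0].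
  by rewrite !KL_0 // (le_trans x0 xy).
rewrite le_eqVlt => /orP[/eqP->//|xy].
exact/ltW/(KL_sdecr bK r0 x0 xy).
Qed.

Definition btil b (S : R -> R) (M : nat) (r t : R) :=
  S (b (pos r) (pos (t / M%:R - 1))) + S (b (pos r) (pos 0)) * b (pos 1) (pos t).

Variables (b : R -> R -> R) (S : R -> R) (M : nat).
Hypotheses (bK : class_KL b) (Sc : continuous S) (S0 : S 0 = 0) (Ss : sincr0 S).

Let B := fun z : R * R => b (pos z.1) (pos z.2).
Let Bc : continuous B := classKL_glob bK.

Lemma pair_cont (f g : R * R -> R) : continuous f -> continuous g ->
  continuous (fun z => (f z, g z)).
Proof.
move=> fc gc z.
exact: (@cvg_pair _ _ _ _ (nbhs (f z)) (nbhs (g z)) _ _ _ f g (fc z) (gc z)).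
Qed.

Lemma pair_cont1 (f g : R -> R) : continuous f -> continuous g ->
  continuous (fun z => (f z, g z)).
Proof.
move=> fc gc z.
exact: (@cvg_pair _ _ _ _ (nbhs (f z)) (nbhs (g z)) _ _ _ f g (fc z) (gc z)).
Qed.

Lemma fst_c : continuous (fun z : R * R => z.1).
Proof. move=> z; exact: (@cvg_fst _ _ (nbhs z.1) (nbhs z.2) _). Qed.
Lemma snd_c : continuous (fun z : R * R => z.2).
Proof. move=> z; exact: (@cvg_snd _ _ (nbhs z.1) (nbhs z.2) _). Qed.
Lemma cst_c (c : R) : continuous (fun z : R * R => c).
Proof. move=> z; exact: cvg_cst. Qed.

Lemma btil_cont : continuous (fun z : R * R => btil b S M z.1 z.2).
Proof.
have h1 : continuous (fun z : R * R => (z.1, z.2 / M%:R - 1)).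
  apply: pair_cont; first exact: fst_c.
  move=> z; apply: cvgB; last exact: cvg_cst.
  apply: cvgMr_tmp; exact: snd_c.
have c1 : continuous (fun z : R * R => S (B (z.1, z.2 / M%:R - 1))).
  move=> z; exact: (continuous_comp (h1 z) (continuous_comp (@Bc _) (@Sc _))).
have c2 : continuous (fun z : R * R => S (B (z.1, 0))).
  have p2 : continuous (fun z : R * R => (z.1, 0)) := @pair_cont (fun z => z.1) (fun z => 0) fst_c (@cst_c 0).
  move=> z; exact: (continuous_comp (p2 z) (continuous_comp (@Bc _) (@Sc _))).
have c3 : continuous (fun z : R * R => B ((1:R), z.2)).
  have p3 : continuous (fun z : R * R => ((1:R), z.2)) := @pair_cont (fun z : R * R => (1:R)) (fun z : R * R => z.2) (@cst_c 1) snd_c.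
  move=> z; exact: (continuous_comp (p3 z) (@Bc _)).
move=> z; exact: (continuousD (c1 z) (continuousM (c2 z) (c3 z))).
Qed.

Hypothesis M0 : (0 < M)%N.

Lemma btil_KL : class_KL (btil b S M).
Proof.
have Mp : 0 < M%:R :> R by rewrite ltr0n.
have Sge0 := sincr_ge0 S0 Ss.
have Sinc := sincr_incr Ss.
split.
- apply: continuous_subspaceT; exact: btil_cont.
- move=> t t0; split.
  + by rewrite /btil (posE (lexx 0)) (KL_0 bK (pos_ge0 _)) (KL_0 bK (lexx 0)) S0 mul0r addr0.
  + apply: continuous_subspaceT => r.
    have pc : continuous (fun r : R => (r, t)).
      apply: (@pair_cont1 (fun r => r) (fun r => t)) => x; [exact: cvg_id|exact: cvg_cst].
    exact: (continuous_comp (@pc r) (@btil_cont _)).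
  + move=> x y x0 xy; rewrite /btil (posE x0) (posE (le_trans x0 (ltW xy))).
    apply: ltr_leD.
      apply: Ss; first exact: KL_ge0 bK x0 (pos_ge0 _).
      exact: (classK_sincr (KL_K bK (pos_ge0 _)) x0 xy).
    apply: ler_wpM2r; first exact: KL_ge0 bK (pos_ge0 _) (pos_ge0 _).
    apply: Sinc; first exact: KL_ge0 bK x0 (pos_ge0 _).
    exact: KL_incr bK x0 (ltW xy) (pos_ge0 _).
- move=> r r0; split.
  + apply: continuous_subspaceT => t.
    have pc : continuous (fun t : R => (r, t)).
      apply: (@pair_cont1 (fun t => r) (fun t => t)) => x; [exact: cvg_cst|exact: cvg_id].
    exact: (continuous_comp (@pc t) (@btil_cont _)).
  + move=> x y x0 xy; rewrite /btil.
    apply: ler_ltD.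
      apply: Sinc; first exact: KL_ge0 bK (pos_ge0 _) (pos_ge0 _).
      apply: KL_decr bK (pos_ge0 _) (pos_ge0 _) _.
      apply: pos_le; apply: lerB => //; rewrite ler_pM2r ?invr_gt0 //.
      exact: ltW.
    have Sp : 0 < S (b (pos r) (pos 0)).
      have bp : 0 < b (pos r) (pos 0).
        by rewrite (posE (lexx 0)) (posE (ltW r0)); exact: KL_pos bK r0 (lexx 0).
      by have := Ss (lexx 0) bp; rewrite S0.
    rewrite ltr_pM2l //.
    rewrite (posE x0) (posE (le_trans x0 (ltW xy))) (posE ler01).
    exact: KL_sdecr bK ltr01 x0 xy.
  + have [_ _ Lr] := bK.
    have T1 : (fun t => S (b (pos r) (pos (t / M%:R - 1)))) @ +oo --> 0.
      rewrite -S0; apply: (cvg_comp (fun t => b (pos r) (pos (t / M%:R - 1))) S _ (@Sc 0)).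
      rewrite (posE (ltW r0)).
      have [_ _ L] := Lr r r0.
      exact: (cvg_comp (fun t => pos (t / M%:R - 1)) (b r) (@pos_infty _ M%:R 1 Mp) L).
    have T2 : (fun t => b (pos 1) (pos t)) @ +oo --> 0.
      rewrite (posE ler01).
      have [_ _ L] := Lr 1 ltr01.
      exact: (cvg_comp (fun t => pos t) (b 1) (@pos_infty1 R) L).
    have := cvgD T1 (cvgMl_tmp (a:=S (b (pos r) (pos 0))) T2).
    rewrite mulr0 addr0 => H; apply: H; exact: _.
Qed.

End KL.
Section IterProps.
Variable R : realType.

Lemma iter_cont (f : R -> R) j : continuous f -> continuous (iter j f).
Proof.
move=> fc; elim: j => [|j IH] x /=; first exact: cvg_id.
exact: (continuous_comp (@IH x) (@fc _)).
Qed.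

Lemma iter0 (f : R -> R) j : f 0 = 0 -> iter j f 0 = 0.
Proof. by move=> f0; elim: j => //= j ->. Qed.

Lemma iter_sincr (f : R -> R) j : f 0 = 0 -> sincr0 f -> sincr0 (iter j f).
Proof.
move=> f0 fs; elim: j => [//|j IH] x y x0 xy /=.
apply: fs; last exact: IH.
by rewrite -(iter0 j f0); apply: (sincr_incr IH).
Qed.

Definition Sfun (k1 : R -> R) (M : nat) (x : R) :=
  iter M (fun y => y + k1 (pos y)) (2 * x).

Lemma Sfun_props k1 M : class_K k1 ->
  [/\ continuous (Sfun k1 M), Sfun k1 M 0 = 0 & sincr0 (Sfun k1 M)].
Proof.
move=> kK; have [k0 _ _] := kK.
have rc : continuous (fun y => y + k1 (pos y)).
  move=> x; apply: cvgD; [exact: cvg_id|exact: classK_glob kK x].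
have r0 : (fun y => y + k1 (pos y)) 0 = 0 by rewrite /= (posE (lexx 0)) k0 addr0.
have rs : sincr0 (fun y => y + k1 (pos y)).
  move=> x y x0 xy /=; rewrite (posE x0) (posE (le_trans x0 (ltW xy))).
  apply: ltr_leD => //; exact: (sincr_incr (classK_sincr kK) x0 (ltW xy)).
split.
- move=> x; rewrite /Sfun.
  have mc : continuous (fun x : R => 2 * x) by move=> z; apply: cvgMl_tmp; exact: cvg_id.
  exact: (continuous_comp (@mc x) (@iter_cont _ M rc _)).
- by rewrite /Sfun mulr0 iter0.
- move=> x y x0 xy; rewrite /Sfun; apply: (iter_sincr M r0 rs).
    by rewrite mulr_ge0.
  by rewrite ltr_pM2l.
Qed.
End IterProps.
Unset Implicit Arguments.
Section Main.
Variable R : realType.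
Variables (n p : nat -> nat).
Variables (nx : forall i, 'rV[R]_(n i) -> R) (nu : forall i, 'rV[R]_(p i) -> R).
Variable fi : forall i, stateE R n -> 'rV[R]_(p i) -> 'rV[R]_(n i).
Variable A : set (stateE R n).
Hypothesis nxN : forall i, is_norm (nx i).
Hypothesis nuN : forall i, is_norm (nu i).
Hypothesis A0 : A !=set0.
Hypothesis wp : well_posed nx nu fi.

Let dA0 := distA_ge0 R n nx A nxN A0.
Let cU0 := normcalU_ge0 R p nu nuN.
Let U0 := normU_ge0 R p nu nuN.

Lemma traj_step (k1 k2 : R -> R) xi u :
  incr0 k2 ->
  (forall xi mu, in_X nx xi -> in_U nu mu ->
     distA nx A (fnet fi xi mu) <= k1 (distA nx A xi) + k2 (normU nu mu)) ->
  in_X nx xi -> in_calU nu u ->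
  forall i, distA nx A (traj fi xi u i.+1) <=
            k1 (distA nx A (traj fi xi u i)) + k2 (normcalU nu u).
Proof.
move=> k2K Hk xiX uU i /=.
apply: le_trans (Hk _ _ (traj_inX R n p nx nu fi wp xi u i xiX uU) (in_calU_U R p nu u i uU)) _.
apply: lerD => //; exact: k2K (U0 _) (normU_le R p nu u i uU).
Qed.

Lemma k_decomp (k M : nat) : (0 < M)%N ->
  k = (M * (k %/ M) + k %% M)%N /\ (k %% M <= M)%N /\
  (k%:R / M%:R - 1 <= (k %/ M)%:R :> R).
Proof.
move=> M0; split; first by rewrite mulnC -divn_eq.
split; first exact: ltnW (ltn_pmod k M0).
have Mp : 0 < M%:R :> R by rewrite ltr0n.
rewrite lerBlDr ler_pdivrMr // natr1 -natrM ler_nat.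
have := ltn_pmod k M0; have := divn_eq k M; lia.
Qed.

Lemma ISS_back M : (0 < M)%N -> ISS_iter nx nu fi M A -> K_bounded nx nu fi A ->
  ISS nx nu fi A.
Proof.
move=> M0 [b [g [bK gK Hb]]] [k1 [k2 [k1K k2K Hk]]].
have [Sc S0 Ss] := Sfun_props M k1K.
pose S := Sfun k1 M.
exists (btil b S M), (fun s => S (g s + k2 s)); split.
- exact: btil_KL.
- exact: classK_comp_sum.
move=> xi u k xiX uU.
set r := distA nx A xi; set s := normcalU nu u.
pose a i := distA nx A (traj fi xi u i).
have a0 : forall i, 0 <= a i by move=> i; exact: dA0.
have k1p : forall x, 0 <= x -> 0 <= k1 (pos x) by move=> x _; exact: classK_ge0 k1K _ (pos_ge0 _).
have k1i : incr0 (fun x => k1 (pos x)).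
  move=> x y x0 xy; rewrite (posE x0) (posE (le_trans x0 xy)).
  exact: (sincr_incr (classK_sincr k1K)).
have k2i : incr0 k2 := sincr_incr (classK_sincr k2K).
have step : forall i, a i.+1 <= k1 (pos (a i)) + k2 s.
  move=> i; rewrite (posE (a0 i)); exact: traj_step k1 k2 xi u k2i Hk xiX uU i.
have s0 : 0 <= s := cU0 u.
have k2s : 0 <= k2 s := classK_ge0 k2K s0.
have gs : 0 <= g s := classK_ge0 gK s0.
have ib := iter_bound R a (fun x => k1 (pos x)) (k2 s) k1p k1i k2s a0 step.
have [ek [jM kl]] := k_decomp k M M0.
set l := (k %/ M)%N in ek kl; set j := (k %% M)%N in ek jM.
have H1 : a (M * l)%N <= Num.max (b r l%:R) (g s) := Hb xi u l xiX uU.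
have r0 : 0 <= r := dA0 xi.
have bl0 : 0 <= b r l%:R by apply: KL_ge0 bK r0 _.
have H2 : a k <= iter M (fun x => x + k1 (pos x)) (a (M * l)%N + k2 s).
  rewrite /a ek; apply: le_trans (ib _ _) _.
  apply: iter_le => //; exact: addr_ge0.
have H3 : a (M * l)%N + k2 s <= b r l%:R + (g s + k2 s).
  rewrite addrA lerD2r; apply: le_trans H1 _.
  by rewrite ge_max lerDl gs lerDr bl0.
have im := iter_mono R (fun x => k1 (pos x)) M k1p k1i.
rewrite -/(a k); apply: le_trans H2 _.
have [bv|vb] := leP (b r l%:R) (g s + k2 s).
- rewrite le_max; apply/orP; right; rewrite /S /Sfun.
  apply: im; first exact: addr_ge0.
  apply: le_trans H3 _; by rewrite mulr2n mulrDl mul1r lerD2r.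
- rewrite le_max; apply/orP; left.
  rewrite /btil.
  apply: le_trans (_ : S (b (pos r) (pos (k%:R / M%:R - 1))) <= _); last first.
    rewrite lerDl; apply: mulr_ge0.
      exact: (sincr_ge0 S0 Ss (KL_ge0 bK (pos_ge0 _) (pos_ge0 _))).
    exact: KL_ge0 bK (pos_ge0 _) (pos_ge0 _).
  apply: le_trans (_ : S (b r l%:R) <= _).
    rewrite /S /Sfun; apply: im; first exact: addr_ge0.
    apply: le_trans H3 _; rewrite mulr2n mulrDl mul1r lerD2l; exact: ltW.
  apply: (sincr_incr Ss) => //; rewrite (posE r0).
  apply: KL_decr bK r0 (pos_ge0 _) _.
  by rewrite /pos ge_max kl ler0n.
Qed.

Lemma iter_lin (c z : R) j : iter j (fun x => x + c * x) z = (1 + c) ^+ j * z.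
Proof. elim: j => [|j IH] /=; first by rewrite expr0 mul1r. rewrite IH exprS; ring. Qed.

Lemma bern (e : R) m : 0 <= e -> e <= 1 -> 1 - m%:R * e <= (1 - e) ^+ m.
Proof.
move=> e0 e1; elim: m => [|m IH]; first by rewrite mul0r subr0 expr0.
rewrite exprSr -natr1.
have h : (1 - m%:R * e) * (1 - e) <= (1 - e) ^+ m * (1 - e).
  by apply: ler_wpM2r => //; rewrite subr_ge0.
have m0 : 0 <= m%:R :> R by rewrite ler0n.
apply: le_trans h; nra.
Qed.

Lemma ISS_fwd : ISS nx nu fi A -> ISS_iter nx nu fi 1 A /\ K_bounded nx nu fi A.
Proof.
move=> [b [g [bK gK Hb]]]; split.
  exists b, g; split => // xi u k xiX uU; rewrite mul1n; exact: Hb.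
exists (fun r => b r 1%:R), g; split => //.
  exact: KL_K bK (ler0n _ _).
move=> xi mu xiX muU.
have := Hb xi (fun _ => mu) 1%N xiX (in_calU_cst R p nu mu muU).
rewrite normcalU_cst /= => H; apply: le_trans H _.
rewrite ge_max lerDl lerDr.
rewrite (classK_ge0 gK (U0 _)) (KL_ge0 bK (dA0 _) (ler0n _ _)) //.
Qed.

Lemma eISS_fwd : eISS nx nu fi A -> eISS_iter nx nu fi 1 A /\ K_bounded_lin nx nu fi A.
Proof.
move=> [C [rho [g [C1 /andP[r0 r1] gK Hb]]]]; split.
  exists C, rho, g; split => //; first by rewrite r0 r1.
  move=> xi u k xiX uU; rewrite mul1n; exact: Hb.
exists (C * rho + 1), g; split => //.
  by apply: ltr_wpDl => //; apply: mulr_ge0 => //; exact: le_trans ler01 C1.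
move=> xi mu xiX muU.
have := Hb xi (fun _ => mu) 1%N xiX (in_calU_cst R p nu mu muU).
rewrite normcalU_cst /= expr1 => H; apply: le_trans H _.
have d0 := dA0 xi; have g0 := classK_ge0 gK (U0 mu).
have h : 0 <= C * rho * distA nx A xi by rewrite !mulr_ge0 //; lra.
rewrite ge_max; apply/andP; split; lra.
Qed.

Lemma eISS_back M : (0 < M)%N -> eISS_iter nx nu fi M A -> K_bounded_lin nx nu fi A ->
  eISS nx nu fi A.
Proof.
move=> M0 [C [rho [g [C1 /andP[r0 r1] gK Hb]]]] [c [k2 [c0 k2K Hk]]].
have Mp : 1 <= M%:R :> R by rewrite ler1n.
pose D := (1 + c) ^+ M.
pose e := (1 - rho) / (2 * M%:R).
pose q := 1 - e.
have eE : 2 * M%:R * e = 1 - rho.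
  rewrite /e mulrC -mulrA mulVf ?mulr1 //; apply: lt0r_neq0; lra.
have e0 : 0 < e by rewrite /e divr_gt0 //; lra.
have e12 : e <= 1 / 2 by nra.
have q0 : 0 < q by rewrite /q; lra.
have q1 : q < 1 by rewrite /q; lra.
have qM : rho <= q ^+ M.
  have e1 : e <= 1 by lra.
  have := bern e M (ltW e0) e1; rewrite /q; lra.
have qMp : 0 < q ^+ M := exprn_gt0 M q0.
have qM1 : q ^+ M <= 1 := exprn_ile1 M (ltW q0) (ltW q1).
have D1 : 1 <= D by apply: exprn_ege1; lra.
have C0 : 0 <= C by lra.
exists (2 * D * C / q ^+ M), q, (fun s => 2 * D * (g s + k2 s)); split.
- rewrite ler_pdivlMr // mul1r; apply: le_trans qM1 _; nra.
- by rewrite (ltW q0) q1.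
- apply: (@classK_comp_sum _ g k2 (fun x => 2 * D * x)) => //.
  + move=> x; apply: cvgMl_tmp; exact: cvg_id.
  + by rewrite mulr0.
  + by move=> x y _ xy; rewrite ltr_pM2l //; nra.
move=> xi u k xiX uU.
set r := distA nx A xi; set s := normcalU nu u.
pose a i := distA nx A (traj fi xi u i).
have a0 : forall i, 0 <= a i by move=> i; exact: dA0.
have k1p : forall x, 0 <= x -> 0 <= c * x by move=> x x0; rewrite mulr_ge0 // ltW.
have k1i : incr0 (fun x => c * x) by move=> x y x0 xy; rewrite ler_wpM2l // ltW.
have k2i : incr0 k2 := sincr_incr (classK_sincr k2K).
have step : forall i, a i.+1 <= c * a i + k2 s.
  move=> i; exact: traj_step (fun x => c * x) k2 xi u k2i Hk xiX uU i.
have s0 : 0 <= s := cU0 u.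
have k2s : 0 <= k2 s := classK_ge0 k2K s0.
have gs : 0 <= g s := classK_ge0 gK s0.
have ib := iter_bound R a (fun x => c * x) (k2 s) k1p k1i k2s a0 step.
have [ek [jM _]] := k_decomp k M M0.
set l := (k %/ M)%N in ek; set j := (k %% M)%N in ek jM.
have H1 : a (M * l)%N <= Num.max (C * rho ^+ l * r) (g s) := Hb xi u l xiX uU.
have r0' : 0 <= r := dA0 xi.
have w0 : 0 <= C * rho ^+ l * r by rewrite !mulr_ge0 // exprn_ge0.
have H2 : a k <= D * (a (M * l)%N + k2 s).
  rewrite /a ek; apply: le_trans (ib _ _) _.
  rewrite /D -iter_lin; apply: iter_le => //; exact: addr_ge0.
have H3 : a (M * l)%N + k2 s <= C * rho ^+ l * r + (g s + k2 s).
  rewrite addrA lerD2r; apply: le_trans H1 _.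
  by rewrite ge_max lerDl gs lerDr w0.
have D0 : 0 <= D by lra.
rewrite -/(a k); apply: le_trans H2 _.
have [wv|vw] := leP (C * rho ^+ l * r) (g s + k2 s).
- rewrite le_max; apply/orP; right.
  apply: le_trans (_ : D * (2 * (g s + k2 s)) <= _).
    apply: ler_wpM2l => //; apply: le_trans H3 _; lra.
  by rewrite mulrA [D * 2]mulrC.
- rewrite le_max; apply/orP; left.
  apply: le_trans (_ : D * (2 * (C * rho ^+ l * r)) <= _).
    apply: ler_wpM2l => //; apply: le_trans H3 _; lra.
  have rl : rho ^+ l <= q ^+ (M * l).
    rewrite exprM; apply: lerXn2r => //; rewrite nnegrE //; exact: ltW.
  have qj : q ^+ (M * l) * q ^+ M <= q ^+ k.
    rewrite ek exprD; apply: ler_wpM2l; first exact: exprn_ge0 (ltW q0).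
    exact: ler_wiXn2l (ltW q0) (ltW q1) _ _ jM.
  have rq : rho ^+ l <= q ^+ k / q ^+ M.
    rewrite ler_pdivlMr //; apply: le_trans qj; apply: ler_wpM2r => //; exact: ltW.
  have -> : 2 * D * C / q ^+ M * q ^+ k * r = (2 * D * C * r) * (q ^+ k / q ^+ M) by ring.
  have -> : D * (2 * (C * rho ^+ l * r)) = (2 * D * C * r) * rho ^+ l by ring.
  apply: ler_wpM2l => //; rewrite !mulr_ge0 //; lra.
Qed.

End Main.

Theorem proposition1 (R : realType) (n p : nat -> nat)
  (nx : forall i, 'rV[R]_(n i) -> R) (nu : forall i, 'rV[R]_(p i) -> R)
  (I : nat -> seq nat)
  (fi : forall i, stateE R n -> 'rV[R]_(p i) -> 'rV[R]_(n i))
  (A : set (stateE R n)) :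
  (forall i, (0 < n i)%N) -> (forall i, (0 < p i)%N) ->
  (forall i, is_norm (nx i)) -> (forall i, is_norm (nu i)) ->
  (forall i, i \notin I i) ->
  (forall i, exists N : nat, forall j, i \in I j -> (j < N)%N) ->
  fi_local I fi -> fi_continuous nx nu I fi ->
  well_posed nx nu fi ->
  A !=set0 -> (forall y, A y -> in_X nx y) -> closed_in_X nx A ->
  (ISS nx nu fi A <->
     exists M : nat, (0 < M)%N /\ ISS_iter nx nu fi M A /\ K_bounded nx nu fi A) /\
  (eISS nx nu fi A <->
     exists M : nat, (0 < M)%N /\ eISS_iter nx nu fi M A /\ K_bounded_lin nx nu fi A).
Proof.
move=> _ _ nxN nuN _ _ _ _ wp A0 _ _; split; split.
- move=> H; exists 1%N; split => //; exact: (ISS_fwd R n p nx nu fi A nxN nuN A0 H).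
- by move=> [M [M0 [H1 H2]]]; exact: (ISS_back R n p nx nu fi A nxN nuN A0 wp M M0 H1 H2).
- move=> H; exists 1%N; split => //; exact: (eISS_fwd R n p nx nu fi A nxN nuN A0 H).
- by move=> [M [M0 [H1 H2]]]; exact: (eISS_back R n p nx nu fi A nxN nuN A0 wp M M0 H1 H2).
Qed.
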